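(* Let $K\ge1$, $\Delta_0,B>0$, and for $k=1,\dots,K$ let $m_k\ge0$, $v_k\ge0$. Let $\mathcal{G}\subset\mathbb{R}^K$ be the set of $\mathbf{r}$ for which there exist $\mathbf{p},\mathbf{y}\in\mathbb{R}^K$ and a $2K\times2K$ real matrix $\mathbf{H}=\begin{bmatrix}\mathbf{H}^{xx}&\mathbf{H}^{x\phi}\\(\mathbf{H}^{x\phi})^{\rm T}&\mathbf{H}^{\phi\phi}\end{bmatrix}$ satisfying: $r_k\ge0$; $r_k\le\Delta_0B\,p_k\log_2(1+y_k/p_k)$; $0\le p_k\le1$; $\sum_kp_k\le1$; $H^{x\phi}_{k,k}=y_k-p_km_k$; $H^{\phi\phi}_{k,k}=v_k$ and $H^{\phi\phi}_{i,j}=0$ for $i\neq j$; $H^{xx}_{k,k}\le p_k-p_k^2$; $\sum_{i,j}H^{xx}_{i,j}\le\sum_ip_i-(\sum_ip_i)^2$; $\mathbf{H}\succeq0$ (all for every $k$). Let $f(\mathbf{r})=\sum_k\ln r_k$ and $\mathbf{r}^*=\arg\max_{\mathbf{r}\in\mathcal{G}}f(\mathbf{r})$. Consider the iteration (Algorithm 1) with tolerance $\hat\epsilon>0$: $\mathbf{w}^{(1)}=[1/\sqrt K,\dots,1/\sqrt K]^{\rm T}$; at iteration $i$, $\mathbf{r}^{(i)}=\arg\max_{\mathbf{r}\in\mathcal{G}}\langle\mathbf{w}^{(i)},\mathbf{r}\rangle$; if $|\langle\mathbf{w}^{(i)},\mathbf{r}^{(i)}-\mathbf{r}^*\rangle|<\hat\epsilon$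 the algorithm terminates, otherwise it sets $$a^{(i)}=\frac{\|\mathbf{r}^*-\mathbf{r}^{(i)}\|_2^2}{\langle\mathbf{w}^{(i)},\mathbf{r}^{(i)}-\mathbf{r}^*\rangle},\quad b^{(i)}=-\min_k\frac{r^*_k-r^{(i)}_k}{w^{(i)}_k},\quad \mathbf{u}^{(i)}=a^{(i)}\mathbf{w}^{(i)}+(\mathbf{r}^*-\mathbf{r}^{(i)})+b^{(i)}\mathbf{w}^{(i)},\quad \mathbf{w}^{(i+1)}=\frac{\mathbf{u}^{(i)}}{\|\mathbf{u}^{(i)}\|_2}.$$ If $\mathbf{w}^{(i)}>0$ and $\|\mathbf{w}^{(i)}\|_2=1$, then $\mathbf{w}^{(i+1)}>0$ and $\|\mathbf{w}^{(i+1)}\|_2=1$.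
   Context: $\langle\cdot,\cdot\rangle$ is the Euclidean inner product; vector inequalities $>0$ are componentwise strict; $\mathbf{H}\succeq0$ means positive semidefinite; $p\log_2(1+y/p)$ is understood as its perspective (value $0$ at $p=0$). $\mathbf{w}^{(i+1)}$ is only computed when iteration $i$ does not terminate. *)

(* Defs.v *)
From HB Require Import structures.
From mathcomp Require Import all_boot all_order all_algebra.
From mathcomp Require Import reals exp.
Set Implicit Arguments. Unset Strict Implicit. Unset Printing Implicit Defensive.
Import Order.TTheory GRing.Theory Num.Theory.
Local Open Scope ring_scope.

Section Defs.
Variable R : realType.

Definition dotp (K : nat) (w r : 'I_K -> R) : R := \sum_(k < K) w k * r k.
Definition norm2 (K : nat) (w : 'I_K -> R) : R := Num.sqrt (dotp w w).

(* minimum over k of g k (meaningful for K >= 1: the head of the nonempty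
   list of values is one of them) *)
Definition min_over (K : nat) (g : 'I_K -> R) : R :=
  let s := [seq g k | k <- enum 'I_K] in foldr Num.min (head 0 s) s.

Definition log2 (x : R) : R := ln x / ln 2.

(* r <= D0 * B * p log2(1 + y/p), where p log2(1+y/p) is the perspective
   function: value 0 at p = 0, and -infinity (constraint infeasible) when
   p > 0 and 1 + y/p <= 0 (outside the domain of log). *)
Definition rate_ok (D0 B r p y : R) : Prop :=
  (p = 0 /\ r <= 0) \/
  (0 < p /\ 0 < p + y /\ r <= D0 * B * (p * log2 (1 + y / p))).

Definition psd (n : nat) (H : 'M[R]_n) : Prop :=
  H^T = H /\ forall x : 'cV[R]_n, 0 <= (x^T *m H *m x) 0 0.

Definition inG (K : nat) (D0 B : R) (m v : 'I_K -> R) (r : 'I_K -> R) : Prop :=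
  exists (p y : 'I_K -> R) (H : 'M[R]_(K + K)),
    let Hxx := ulsubmx H in
    let Hxp := ursubmx H in
    let Hpp := drsubmx H in
    (forall k, 0 <= r k) /\
    (forall k, rate_ok D0 B (r k) (p k) (y k)) /\
    (forall k, 0 <= p k <= 1) /\
    \sum_(k < K) p k <= 1 /\
    (forall k, Hxp k k = y k - p k * m k) /\
    (forall i j, Hpp i j = if i == j then v i else 0) /\
    (forall k, Hxx k k <= p k - p k ^+ 2) /\
    \sum_(i < K) \sum_(j < K) Hxx i j <=
       \sum_(i < K) p i - (\sum_(i < K) p i) ^+ 2 /\
    psd H.

Definition f_obj (K : nat) (r : 'I_K -> R) : R := \sum_(k < K) ln (r k).

(* rstar = argmax f over G, with ln 0 = -infinity: rstar in G, rstar > 0, and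
   f(rstar) >= f(r) for every r in G with all components positive. *)
Definition is_argmax_f (K : nat) (D0 B : R) (m v : 'I_K -> R)
  (rs : 'I_K -> R) : Prop :=
  [/\ inG D0 B m v rs, (forall k, 0 < rs k) &
      forall r, inG D0 B m v r -> (forall k, 0 < r k) -> f_obj r <= f_obj rs].

Definition is_argmax_lin (K : nat) (D0 B : R) (m v : 'I_K -> R)
  (w r : 'I_K -> R) : Prop :=
  inG D0 B m v r /\ forall r', inG D0 B m v r' -> dotp w r' <= dotp w r.

Definition terminates (K : nat) (eps : R) (w ri rs : 'I_K -> R) : Prop :=
  `|dotp w (fun k => ri k - rs k)| < eps.

Definition next_w (K : nat) (w ri rs : 'I_K -> R) : 'I_K -> R :=
  let d := fun k => rs k - ri k in
  let a := dotp d d / dotp w (fun k => ri k - rs k) in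
  let b := - min_over (fun k => d k / w k) in
  let u := fun k => a * w k + d k + b * w k in
  fun k => u k / norm2 u.

Definition w_init (K : nat) : 'I_K -> R := fun _ => (Num.sqrt (K%:R))^-1.

End Defs.

(* Main.v *)
Require Import Defs.
From HB Require Import structures.
From mathcomp Require Import all_boot all_order all_algebra.
From mathcomp Require Import reals exp.
From mathcomp Require Import ring lra.
Import Order.TTheory GRing.Theory Num.Theory.
Local Open Scope ring_scope.

Lemma foldr_min_le (R : realType) (s : seq R) x0 y :
  y \in s -> foldr Num.min x0 s <= y.
Proof.
elim: s => //= a s IH; rewrite in_cons => /orP [/eqP -> | ys].
  by rewrite ge_min lexx.
by rewrite ge_min IH ?orbT.
Qed.

Lemma min_over_le (R : realType) (K : nat) (g : 'I_K -> R) k :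
  min_over g <= g k.
Proof.
rewrite /min_over; apply: foldr_min_le.
by apply/mapP; exists k => //; rewrite mem_enum.
Qed.

Lemma dotpB (R : realType) (K : nat) (w a b : 'I_K -> R) :
  dotp w (fun k => a k - b k) = dotp w a - dotp w b.
Proof.
rewrite /dotp -sumrB; apply: eq_bigr => k _; by rewrite mulrBr.
Qed.

Lemma dotp_pos (R : realType) (K : nat) (hK : (1 <= K)%N) (u : 'I_K -> R) :
  (forall k, 0 < u k) -> 0 < dotp u u.
Proof.
move=> hu; rewrite /dotp (bigD1 (Ordinal hK)) //=.
apply: (lt_le_trans (mulr_gt0 (hu (Ordinal hK)) (hu (Ordinal hK)))).
rewrite lerDl; apply: sumr_ge0 => k _.
by rewrite mulr_ge0 // ltW.
Qed.

Lemma normalize_pos (R : realType) (K : nat) (hK : (1 <= K)%N) (u : 'I_K -> R) :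
  (forall k, 0 < u k) ->
  (forall k, 0 < (fun k => u k / norm2 u) k) /\ norm2 (fun k => u k / norm2 u) = 1.
Proof.
move=> hu; have hp := @dotp_pos R K hK u hu.
have hn : 0 < norm2 u by rewrite /norm2 sqrtr_gt0.
split => [k|]; first by rewrite /= divr_gt0.
rewrite {1}/norm2.
have -> : dotp (fun k => u k / norm2 u) (fun k => u k / norm2 u) = dotp u u / (norm2 u)^+2.
  rewrite /dotp mulr_suml; apply: eq_bigr => k _.
  by field; rewrite gt_eqF.
rewrite /norm2 sqr_sqrtr ?ltW // divff ?gt_eqF // sqrtr1.
done.
Qed.

Theorem corollary3 (R : realType) (K : nat) (hK : (1 <= K)%N)
  (D0 B : R) (hD0 : 0 < D0) (hB : 0 < B)
  (m v : 'I_K -> R) (hm : forall k, 0 <= m k) (hv : forall k, 0 <= v k)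
  (eps : R) (heps : 0 < eps)
  (rs : 'I_K -> R) (hrs : is_argmax_f D0 B m v rs)
  (w r : nat -> 'I_K -> R)
  (hw1 : w 1%N = @w_init R K)
  (hr : forall i : nat, (1 <= i)%N ->
          (forall j : nat, (1 <= j < i)%N -> ~ terminates eps (w j) (r j) rs) ->
          is_argmax_lin D0 B m v (w i) (r i))
  (hwnext : forall i : nat, (1 <= i)%N ->
          (forall j : nat, (1 <= j <= i)%N -> ~ terminates eps (w j) (r j) rs) ->
          w i.+1 = next_w (w i) (r i) rs) :
  forall i : nat, (1 <= i)%N ->
    (forall j : nat, (1 <= j <= i)%N -> ~ terminates eps (w j) (r j) rs) ->
    (forall k, 0 < w i k) -> norm2 (w i) = 1 ->
    (forall k, 0 < w i.+1 k) /\ norm2 (w i.+1) = 1.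
Proof.
move=> i hi hnt hpos hn.
have [_ hmax] : is_argmax_lin D0 B m v (w i) (r i).
  apply: hr hi _ => j /andP [a b]; apply: hnt; by rewrite a ltnW.
have hnti := hnt i ltac:(by rewrite hi leqnn).
rewrite (hwnext i hi hnt).
case: hrs => hrsG _ _.
have hge := hmax _ hrsG.
move: hnti hge hpos; rewrite /terminates /next_w.
set W := w i; set ri := r i => hnti hge hpos.
have hdp : 0 < dotp W (fun k => ri k - rs k).
  rewrite dotpB in hnti *.
  have : eps <= `|dotp W ri - dotp W rs| by rewrite leNgt; apply/negP.
  rewrite ger0_norm ?subr_ge0 // => h; lra.
set d := fun k => rs k - ri k.
have hdd : 0 < dotp d d.
  rewrite lt_neqAle eq_sym; apply/andP; split; last first.
    by apply: sumr_ge0 => k _; rewrite -expr2 sqr_ge0.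
  apply/negP => /eqP h0.
  have hz : forall k, d k * d k = 0.
    by move=> k; apply: (psumr_eq0P _ h0) => // j _; rewrite -expr2 sqr_ge0.
  have : dotp W (fun k => ri k - rs k) = 0.
    apply: big1 => k _.
    have /eqP := hz k; rewrite mulf_eq0 orbb /d => /eqP e.
    have -> : ri k - rs k = 0 by lra.
    by rewrite mulr0.
  move=> e; rewrite e in hdp; by rewrite ltxx in hdp.
apply: (@normalize_pos R K hK) => k.
set mn := min_over _.
have hmn : mn <= (rs k - ri k) / W k by apply: min_over_le.
have ha : 0 < dotp d d / dotp W (fun k0 : 'I_K => ri k0 - rs k0) * W k.
  by rewrite mulr_gt0 ?divr_gt0.
have e : rs k - ri k = ((rs k - ri k) / W k) * W k by rewrite divfK ?gt_eqF.
have hb : 0 <= (rs k - ri k) + - mn * W k.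
  rewrite [X in X + _]e -mulrDl mulr_ge0 ?subr_ge0 //.
  exact: ltW.
rewrite -addrA; exact: ltr_pwDl ha hb.
Qed.
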